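(* The following two statements are equivalent: (a) Every cyclically $4$-edge-connected cubic graph $G$ admits a proper $5$-edge-coloring $c$ with $|N_G(c)|\le 9$. (b) There exists a sublinear function $f:\mathbb{N}\to\mathbb{N}$ such that every cyclically $4$-edge-connected cubic graph $G$ admits a proper $5$-edge-coloring $c$ with $|N_G(c)|\le f(|V(G)|)$.
   Context: Graphs are finite, undirected, loopless, and may contain parallel edges. A cubic graph is cyclically $4$-edge-connected if it has no edge cut of size less than $4$ whose removal leaves at least two components each containing a cycle. A proper $k$-edge-coloring of $G$ is a map $c:E(G)\to\{1,\dots,k\}$ with adjacent edges receiving different colors. For such $c$ and a vertex $v$, $S_c(v)$ is the set of colors on edges incident to $v$. An edge $uv$ of a cubic graph is poor if $|S_c(u)\cup S_c(v)|=3$, rich if $|S_c(u)\cup S_c(v)|=5$, and abnormal if it is neither poor nor rich. $N_G(c)$ denotes the set of abnormal edges of $G$ with respect to $c$. A function $f:\mathbb{N}\to\mathbb{N}$ is sublinear if $\lim_{n\to\infty} f(n)/n=0$. *)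

(* Defs.v *)
From mathcomp Require Import all_boot.
From Stdlib Require Import Rdefinitions Raxioms RIneq Rseries.
Set Implicit Arguments. Unset Strict Implicit. Unset Printing Implicit Defensive.

(* A finite loopless multigraph is given by a finite vertex type V, a finite
   edge type E and two endpoint maps s t : E -> V (parallel edges allowed). *)
Section Multigraph.
Variables (V E : finType) (s t : E -> V).

Definition loopless : Prop := forall e, s e != t e.

Definition incident (v : V) : {set E} := [set e | (s e == v) || (t e == v)].

Definition cubic : Prop := forall v, #|incident v| = 3.

Definition adjG (A : {set E}) : rel V :=
  fun x y => [exists e in A, ((s e == x) && (t e == y)) || ((s e == y) && (t e == x))].

Definition deg_in (A : {set E}) (v : V) : nat := #|A :&: incident v|.

Definition is_cycle (C : {set E}) : Prop :=
  [/\ C != set0,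
      (forall v, deg_in C v = 0 \/ deg_in C v = 2) &
      (forall e1 e2, e1 \in C -> e2 \in C -> connect (adjG C) (s e1) (s e2))].

Definition comp_has_cycle (F : {set E}) (x : V) : Prop :=
  exists C : {set E}, [/\ is_cycle C, C \subset ~: F &
    (forall e, e \in C -> connect (adjG (~: F)) x (s e))].

Definition cyc4_edge_connected : Prop :=
  forall F : {set E}, #|F| < 4 ->
    ~ (exists x y : V, [/\ ~~ connect (adjG (~: F)) x y,
                           comp_has_cycle F x & comp_has_cycle F y]).

(* edge colorings with 5 colours; colour i : 'I_5 stands for i+1 *)
Definition proper_coloring (c : E -> 'I_5) : Prop :=
  forall v, {in incident v &, injective c}.

Definition colset (c : E -> 'I_5) (v : V) : {set 'I_5} := c @: incident v.

Definition poor (c : E -> 'I_5) (e : E) : bool :=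
  #|colset c (s e) :|: colset c (t e)| == 3.
Definition rich (c : E -> 'I_5) (e : E) : bool :=
  #|colset c (s e) :|: colset c (t e)| == 5.

Definition abnormal_edges (c : E -> 'I_5) : {set E} :=
  [set e | ~~ poor c e && ~~ rich c e].

End Multigraph.

Definition c4c_cubic (V E : finType) (s t : E -> V) : Prop :=
  [/\ loopless s t, cubic s t & cyc4_edge_connected s t].

Definition sublinear (f : nat -> nat) : Prop :=
  Un_cv (fun n => Rdiv (INR (f n)) (INR n)) R0.

(* Main.v *)
Require Import Defs.
From Stdlib Require Import Reals Lra Lia Classical.
From mathcomp Require Import all_boot zify.
Set Implicit Arguments. Unset Strict Implicit. Unset Printing Implicit Defensive.

Section Gen.
Variables (V E : finType) (s t : E -> V).

Definition delta (A : {set V}) : {set E} := [set e | (s e \in A) != (t e \in A)].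
Definition inner (A : {set V}) : {set E} := [set e | (s e \in A) && (t e \in A)].

Lemma sum_mem_card (T : finType) (X : {set T}) : #|X| = \sum_x ((x \in X) : nat).
Proof. by rewrite -sum1_card big_mkcond /=; apply: eq_bigr => e _; case: (e \in _). Qed.

Lemma card_inc_sum v : #|incident s t v| = \sum_e (e \in incident s t v).
Proof. by rewrite -sum1_card big_mkcond /=; apply: eq_bigr => e _; case: (e \in _). Qed.

Lemma sum_eq1 (A : {set V}) a : \sum_(v in A) ((v == a) : nat) = (a \in A).
Proof.
rewrite big_mkcond /= (bigD1 a) //= big1 ?addn0; first by rewrite eqxx; case: (a \in A).
by move=> v /negbTE ->; case: (v \in A).
Qed.

Lemma handshake (A : {set V}) : loopless s t ->
  \sum_(v in A) #|incident s t v| = 2 * #|inner A| + #|delta A|.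
Proof.
move=> hl.
transitivity (\sum_(v in A) \sum_e ((e \in incident s t v) : nat)).
  by apply: eq_bigr => v _; rewrite card_inc_sum.
rewrite exchange_big /=.
transitivity (\sum_e (2 * (e \in inner A) + (e \in delta A))).
  apply: eq_bigr => e _.
  rewrite (eq_bigr (fun v => ((v == s e) : nat) + (v == t e))); last first.
    move=> v _; rewrite inE (eq_sym (s e)) (eq_sym (t e)); case: (v =P s e) => [->|] //=.
    by rewrite (negbTE (hl e)).
  rewrite big_split /= !sum_eq1 !inE.
  by case: (s e \in A); case: (t e \in A).
by rewrite big_split /= -big_distrr /= -!sum_mem_card.
Qed.
End Gen.

Section Cyc.
Variables (V E : finType) (s t : E -> V).
Hypothesis hl : loopless s t.

Lemma degU (f : E) (P : {set E}) (v : V) : f \notin P ->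
  deg_in s t (f |: P) v = deg_in s t P v + (f \in incident s t v).
Proof.
move=> fP; rewrite /deg_in setIUl; case: (boolP (f \in incident s t v)) => h.
  have -> : [set f] :&: incident s t v = [set f].
    by apply/setP => x; rewrite !inE; case: (x =P f) => // ->; move: h; rewrite inE.
  by rewrite cardsU1 inE (negbTE fP) /= addnC.
have -> : [set f] :&: incident s t v = set0.
  by apply/setP => x; rewrite !inE; case: (x =P f) => // ->; move: h; rewrite inE => /negbTE ->.
by rewrite set0U addn0.
Qed.

Lemma deg1 (f : E) (v : V) : deg_in s t [set f] v = (f \in incident s t v).
Proof. by rewrite -(setU0 [set f]) degU ?inE // /deg_in set0I cards0. Qed.

Lemma adjG_sym (B : {set E}) : symmetric (adjG s t B).
Proof.
move=> x y; apply/existsP/existsP => [[e He]|[e He]]; exists e; move: He;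
by case/andP => -> /=; rewrite orbC.
Qed.

Lemma adjG_mono (B B' : {set E}) x y : B \subset B' -> adjG s t B x y -> adjG s t B' x y.
Proof.
move=> sub /existsP[e /andP[eB h]]; apply/existsP; exists e; by rewrite (subsetP sub _ eB).
Qed.

Lemma connect_mono (B B' : {set E}) x y : B \subset B' -> connect (adjG s t B) x y -> connect (adjG s t B') x y.
Proof. move=> sub; apply: connect_sub => u w h; apply: connect1; exact: adjG_mono h. Qed.

Lemma adj_edge (B : {set E}) x y : adjG s t B x y ->
  exists2 f, f \in B & ((s f == x) && (t f == y)) || ((s f == y) && (t f == x)).
Proof. by case/existsP => f /andP[fB h]; exists f. Qed.

Lemma edge_adj (B : {set E}) f : f \in B -> adjG s t B (s f) (t f).
Proof. move=> fB; apply/existsP; exists f; by rewrite fB !eqxx. Qed.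

Lemma path_edges (B : {set E}) a p : path (adjG s t B) a p -> uniq (a :: p) -> p != [::] ->
  exists P : {set E}, [/\ P \subset B, deg_in s t P a = 1, deg_in s t P (last a p) = 1,
    (forall v, v != a -> v != last a p -> deg_in s t P v = 0 \/ deg_in s t P v = 2) &
    (forall v, 0 < deg_in s t P v -> v \in a :: p) /\
    (forall e, e \in P -> connect (adjG s t P) a (s e))].
Proof.
elim: p a => [//|c p IH] a /= /andP[ac pth] /andP[anin un] _.
have [f fB hf] := adj_edge ac.
have finc : forall v, (f \in incident s t v) = (v == a) || (v == c).
  move=> v; rewrite inE; case/orP: hf => /andP[/eqP -> /eqP ->]; first by rewrite !(eq_sym v).
  by rewrite orbC !(eq_sym v).
have hfa : adjG s t [set f] a c.
  apply/existsP; exists f; by rewrite inE eqxx.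
have fsc : connect (adjG s t [set f]) a (s f) /\ connect (adjG s t [set f]) a c.
  split; last exact: connect1 hfa.
  by case/orP: hf => /andP[/eqP -> _]; [exact: connect0 | exact: connect1 hfa].
have ac' : a != c by move: anin; rewrite inE negb_or => /andP[].
case: p pth un IH anin => [|d p] pth un IH anin.
  exists [set f]; split => //.
  - by rewrite sub1set.
  - by rewrite deg1 finc eqxx.
  - by rewrite deg1 finc eqxx orbT.
  - by move=> v /negbTE h1 /negbTE h2; left; rewrite deg1 finc h1 h2.
  split.
  - by move=> v; rewrite deg1 finc !inE; case: (v == a); case: (v == c).
  - by move=> e; rewrite inE => /eqP ->; case: fsc.
have [P [PB Pc Pb Po [Psupp Pconn]]] := IH c pth un isT.
have aP : deg_in s t P a = 0.
  case: (posnP (deg_in s t P a)) => // /Psupp; by rewrite (negbTE anin).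
have fP : f \notin P.
  apply/negP => fP; have : f \in P :&: incident s t a by rewrite inE fP andTb finc eqxx.
  by rewrite /deg_in in aP; rewrite (cards0_eq aP) inE.
have lst : last c (d :: p) != a.
  apply/negP => /eqP h; move: anin; by rewrite -h mem_last.
exists (f |: P); split.
- by rewrite subUset sub1set fB PB.
- by rewrite degU // aP finc eqxx.
- rewrite degU // Pb finc (negbTE lst).
  have : last c (d :: p) != c.
    apply/negP => /eqP h; case/andP: un => cn _; move: (mem_last d p); rewrite /= in h; by rewrite h (negbTE cn).
  by move/negbTE ->.
- move=> v va vb; rewrite degU // finc (negbTE va) /=.
  case: (v =P c) => [->|vc]; first by rewrite Pc; right.
  rewrite addn0; apply: Po => //; exact/eqP.
split.
- move=> v; rewrite degU // finc; case: (v =P a) => [->|_]; first by move=> _; rewrite inE eqxx.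
  case: (v =P c) => [->|_]; first by move=> _; rewrite !inE eqxx orbT.
  rewrite addn0 => /Psupp h; by rewrite inE h orbT.
- have cfa : connect (adjG s t (f |: P)) a c.
    by apply: connect_mono (proj2 fsc); rewrite sub1set setU11.
  move=> e; rewrite !inE => /orP[/eqP ->|eP].
    by apply: connect_mono (proj1 fsc); rewrite sub1set setU11.
  apply: connect_trans cfa _; apply: connect_mono (Pconn e eP); exact: subsetUr.
Qed.
End Cyc.

Section Cyc2.
Variables (V E : finType) (s t : E -> V).
Hypothesis hl : loopless s t.

Lemma close_cycle (B : {set E}) e : e \notin B -> connect (adjG s t B) (s e) (t e) ->
  exists C : {set E}, C \subset e |: B /\ is_cycle s t C.
Proof.
move=> eB /connectP[p pth lst].
case/shortenP: pth lst => p' pth' un' _ lst.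
have ab : s e != t e := hl e.
have p'n : p' != [::] by case: p' lst {pth' un'} => //= h; rewrite h eqxx in ab.
have [P [PB Pa Pb Po [_ Pconn]]] := path_edges pth' un' p'n.
rewrite -lst in Pb Po.
have eP : e \notin P by apply/negP => /(subsetP PB); rewrite (negbTE eB).
have einc : forall v, (e \in incident s t v) = (v == s e) || (v == t e).
  by move=> v; rewrite inE !(eq_sym v).
have conn : forall f, f \in e |: P -> connect (adjG s t (e |: P)) (s e) (s f).
  move=> f; rewrite !inE => /orP[/eqP ->|fP]; first exact: connect0.
  apply: connect_mono (Pconn f fP); exact: subsetUr.
exists (e |: P); split; first by apply: setUS.
split.
- by apply/set0Pn; exists e; exact: setU11.
- move=> v; rewrite degU // einc.
  case: (v =P s e) => [->|va]; first by rewrite Pa; right.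
  case: (v =P t e) => [->|vb]; first by rewrite Pb; right.
  by rewrite addn0; apply: Po; apply/eqP.
- move=> e1 e2 h1 h2; apply: connect_trans (conn _ h2).
  rewrite (sym_connect_sym (@adjG_sym _ _ s t _)); exact: conn.
Qed.

Lemma cycle_exists n : forall (B : {set E}) (A : {set V}), #|B| <= n ->
  (forall e, e \in B -> (s e \in A) && (t e \in A)) -> 0 < #|A| <= #|B| ->
  exists C : {set E}, C \subset B /\ is_cycle s t C.
Proof.
elim: n => [|n IH] B A Bn BA /andP[A0 AB].
  by move: (leq_trans A0 (leq_trans AB Bn)).
have : 0 < #|B| by apply: leq_trans A0 AB.
case/card_gt0P => e eB.
set B' := B :\ e.
have eB' : e \notin B' by rewrite !inE eqxx.
have BB' : e |: B' = B by rewrite setD1K.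
case: (boolP (connect (adjG s t B') (s e) (t e))) => hc.
  have [C [CB Cc]] := close_cycle eB' hc; exists C; split => //; by rewrite -BB'.
set A1 := [set v in A | connect (adjG s t B') (s e) v].
set X := [set f | s f \in A1].
have cB : #|B'| + 1 = #|B| by rewrite -BB' cardsU1 eB' addnC.
have cB' := cardsID X B'.
have cA := cardsID A1 A.
have sA1 : A :&: A1 = A1 by apply/setIidPr; apply/subsetP => v; rewrite inE => /andP[].
rewrite sA1 in cA.
have [seA teA] : (s e \in A) /\ (t e \in A) by move/andP: (BA e eB).
have A10 : 0 < #|A1|.
  by apply/card_gt0P; exists (s e); rewrite inE seA connect0.
have A20 : 0 < #|A :\: A1|.
  by apply/card_gt0P; exists (t e); rewrite !inE teA (negbTE hc) andbF.
have B'B : forall f, f \in B' -> f \in B by move=> f; rewrite inE => /andP[].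
have adjf : forall f, f \in B' -> adjG s t B' (s f) (t f) by move=> f fB; apply: edge_adj.
have sub1 : #|B' :&: X| <= n.
  by have := subset_leq_card (subsetIl B' X); lia.
have sub2 : #|B' :\: X| <= n.
  by have := subset_leq_card (subsetDl B' X); lia.
have mA1 : forall v, (v \in A1) = (v \in A) && connect (adjG s t B') (s e) v by move=> v; rewrite inE.
have mX : forall f, (f \in X) = (s f \in A1) by move=> f; rewrite inE.
case: (leqP #|A1| #|B' :&: X|) => h1.
  have hA : forall f, f \in B' :&: X -> (s f \in A1) && (t f \in A1).
    move=> f /setIP[fB' fX]; rewrite -mX fX /=; move: fX; rewrite mX mA1 => /andP[sA cf].
    rewrite mA1; move/andP: (BA f (B'B f fB')) => [_ ->] /=.
    apply: connect_trans cf _; apply: connect1; exact: adjf.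
  have [C [CB Cc]] := IH (B' :&: X) A1 sub1 hA (introT andP (conj A10 h1)).
  exists C; split => //; apply: (subset_trans CB); apply/subsetP => f /setIP[/B'B] //.
have h2 : #|A :\: A1| <= #|B' :\: X| by move: AB; rewrite -cB -cA -cB'; lia.
have hA : forall f, f \in B' :\: X -> (s f \in A :\: A1) && (t f \in A :\: A1).
  move=> f /setDP[fB' sf]; move/andP: (BA f (B'B f fB')) => [sA tA].
  rewrite !in_setD sA tA !andbT; move: sf; rewrite mX => sf; rewrite sf /=.
  apply/negP => ct; move/negP: sf; apply.
  move: ct; rewrite !mA1 sA tA /= => ct.
  apply: connect_trans ct _; apply: connect1; rewrite adjG_sym; exact: adjf.
have [C [CB Cc]] := IH (B' :\: X) (A :\: A1) sub2 hA (introT andP (conj A20 h2)).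
exists C; split => //; apply: (subset_trans CB); apply/subsetP => f /setDP[/B'B] //.
Qed.
End Cyc2.

Section Cut.
Variables (V E : finType) (s t : E -> V).

Definition cutprop : Prop :=
  forall A : {set V}, #|delta s t A| <= 3 -> #|A| <= 1 \/ #|~: A| <= 1.

Lemma delta_compl (A : {set V}) : delta s t (~: A) = delta s t A.
Proof. by apply/setP => e; rewrite !inE; case: (s e \in A); case: (t e \in A). Qed.

Lemma closed_delta (A : {set V}) : closed (adjG s t (~: delta s t A)) A.
Proof.
move=> x y /existsP[e /andP[]]; rewrite !inE negbK => /eqP h.
by case/orP => /andP[/eqP <- /eqP <-].
Qed.

Lemma inner_cycle (A : {set V}) : loopless s t -> cubic s t ->
  #|delta s t A| <= 3 -> 2 <= #|A| ->
  exists C : {set E}, [/\ C \subset inner s t A, is_cycle s t C & C != set0].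
Proof.
move=> hl hc d3 A2.
have hs := handshake A hl.
rewrite (eq_bigr (fun _ => 3)) ?sum_nat_const in hs; last by move=> v _; apply: hc.
have [C [CB Cc]] : exists C : {set E}, C \subset inner s t A /\ is_cycle s t C.
  apply: (@cycle_exists _ _ s t hl #|inner s t A| (inner s t A) A (leqnn _)).
    by move=> e; rewrite inE.
  apply/andP; split; first by apply: leq_trans A2.
  lia.
by exists C; case: Cc.
Qed.

Lemma c4c_cutprop : loopless s t -> cubic s t -> cyc4_edge_connected s t -> cutprop.
Proof.
move=> hl hc h4 A dA.
case: (leqP #|A| 1) => a1; first by left.
case: (leqP #|~: A| 1) => a2; first by right.
exfalso.
have [C1 [C1A C1c C1n]] := inner_cycle hl hc dA a1.
have [C2 [C2A C2c C2n]] : exists C : {set E}, [/\ C \subset inner s t (~: A), is_cycle s t C & C != set0].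
  by apply: inner_cycle => //; rewrite delta_compl.
case/set0Pn: C1n => e1 e1C; case/set0Pn: C2n => e2 e2C.
apply: (h4 (delta s t A)); first by apply: leq_ltn_trans dA _.
exists (s e1), (s e2).
have hcomp : forall (B : {set V}) (C : {set E}) (e0 : E), C \subset inner s t B -> is_cycle s t C -> e0 \in C ->
   delta s t A = delta s t B -> comp_has_cycle s t (delta s t A) (s e0).
  move=> B C e0 CB Cc e0C dAB; exists C; split => //.
    apply/subsetP => f fC; rewrite dAB !inE; move: (subsetP CB f fC); rewrite inE => /andP[-> ->].
    by [].
  move=> f fC; case: Cc => _ _ /(_ e0 f e0C fC) h; apply: connect_mono h.
  apply/subsetP => g gC; rewrite dAB !inE; move: (subsetP CB g gC); rewrite inE => /andP[-> ->].
  by [].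
split.
- apply/negP => /(closed_connect (@closed_delta A)).
  move: (subsetP C1A e1 e1C) (subsetP C2A e2 e2C); rewrite !inE => /andP[-> _] /andP[/negbTE -> _].
  by [].
- exact: (hcomp A C1).
- apply: (hcomp (~: A) C2) => //; by rewrite delta_compl.
Qed.

Lemma cutprop_c4c : loopless s t -> cutprop -> cyc4_edge_connected s t.
Proof.
move=> hl hcp F F4 [x [y [nxy [C1 [C1c C1F C1x]] [C2 [C2c C2F C2y]]]]].
set A := [set z | connect (adjG s t (~: F)) x z].
have dF : delta s t A \subset F.
  apply/subsetP => e; rewrite !inE; apply: contraR => eF.
  have ad : adjG s t (~: F) (s e) (t e) by apply: edge_adj; rewrite inE.
  apply/eqP; apply/idP/idP => h; first by apply: connect_trans h (connect1 ad).
  by apply: connect_trans h (connect1 _); rewrite adjG_sym.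
have : #|delta s t A| <= 3 by apply: leq_trans (subset_leq_card dF) _; rewrite -ltnS.
move/hcp.
have two : forall (B : {set V}) (C : {set E}), is_cycle s t C -> (forall e, e \in C -> s e \in B) ->
   (forall e, e \in C -> t e \in B) -> 1 < #|B|.
  move=> B C [/set0Pn[e eC] _ _] hs ht.
  have : [set s e; t e] \subset B by rewrite subUset !sub1set hs // ht.
  by move/subset_leq_card; rewrite cards2 (hl e).
have csym : connect_sym (adjG s t (~: F)) by apply: sym_connect_sym; apply: adjG_sym.
have tin : forall (C : {set E}) z e, C \subset ~: F -> e \in C -> connect (adjG s t (~: F)) z (s e) ->
    connect (adjG s t (~: F)) z (t e).
  move=> C z e CF eC h; apply: connect_trans h (connect1 _); apply: edge_adj; exact: (subsetP CF).
have h1 : 1 < #|A|.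
  apply: (two A C1 C1c) => e eC; rewrite inE; [exact: C1x | exact: (tin C1 x e C1F eC (C1x e eC))].
have h2 : 1 < #|~: A|.
  apply: (two (~: A) C2 C2c) => e eC; rewrite !inE; apply/negP => h; move/negP: nxy; apply.
    by apply: connect_trans h _; rewrite csym; apply: C2y.
  by apply: connect_trans h _; rewrite csym; apply: (tin C2 y e C2F eC (C2y e eC)).
by case; lia.
Qed.
End Cut.

Section Ring.
Variable k : nat.
Notation L := 'I_k.+2.

Lemma ring_const (P : L -> bool) (i0 : L) :
  (forall i, i != i0 -> P i = P (ordS i)) -> forall i, P i = P (ordS i0).
Proof.
move=> h.
have key : forall n, n < k.+2 -> forall j : L, val j = (i0 + 1 + n) %% k.+2 -> P j = P (ordS i0).
  elim=> [|n IH] nlt j hj.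
    by congr P; apply: val_inj; rewrite hj /= addn0 addn1.
  set j' := ord_pred j.
  have hj' : val j' = (i0 + 1 + n) %% k.+2.
    have e1 : (j' + 1) %% k.+2 = (i0 + 1 + n + 1) %% k.+2.
      have hv : j'.+1 %% k.+2 = val j := congr1 val (ord_predK j).
      by rewrite addn1 hv hj; congr (_ %% _); lia.
    have := e1; move/eqP; rewrite eqn_modDr => /eqP <-.
    by rewrite modn_small.
  have nj : j' != i0.
    apply/negP => /eqP h0; move: hj'; rewrite h0 => /eqP.
    rewrite -[X in X == _](modn_small (ltn_ord i0)) -[X in X %% _ == _](addn0 i0) -addnA eqn_modDl.
    rewrite mod0n modn_small; [by [] | lia].
  rewrite -(ord_predK j) -/j' -h // IH //; lia.
move=> i.
case: (leqP (i0 + 1) i) => hi.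
  apply: (key (i - (i0 + 1))); first by have := ltn_ord i; lia.
  by rewrite subnKC // modn_small.
apply: (key (i + k.+2 - (i0 + 1))); first by have := ltn_ord i0; lia.
have -> : i0 + 1 + (i + k.+2 - (i0 + 1)) = i + k.+2 by have := ltn_ord i0; lia.
by rewrite modnDr modn_small.
Qed.
End Ring.

Section Cover.
Variables (V E : finType) (s t : E -> V) (D : {set E}) (k : nat).
Notation L := 'I_k.+2.
Hypothesis hl : loopless s t.
Hypothesis hc : cubic s t.

Definition hs (p : E * L) : V * L := (s p.1, p.2).
Definition ht (p : E * L) : V * L := (t p.1, if p.1 \in D then ordS p.2 else p.2).

Lemma H_loopless : loopless hs ht.
Proof. move=> [e i]; rewrite /hs /ht /= xpair_eqE negb_and (hl e) //. Qed.

Definition lv (x : V) (i : L) (e : E) : L :=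
  if s e == x then i else if e \in D then ord_pred i else i.

Lemma H_inc x i : incident hs ht (x, i) = (fun e => (e, lv x i e)) @: incident s t x.
Proof.
apply/setP => [[e j]]; rewrite inE /hs /ht /= !xpair_eqE.
apply/idP/idP.
  case/orP => [/andP[/eqP sx /eqP ji]|/andP[/eqP tx /eqP ji]].
    apply/imsetP; exists e; first by rewrite inE sx eqxx.
    by rewrite /lv sx eqxx ji.
  apply/imsetP; exists e; first by rewrite inE tx eqxx orbT.
  have sx : (s e == x) = false by apply/negbTE; rewrite -tx; exact: hl.
  rewrite /lv sx; case: (e \in D) ji => ji; last by rewrite ji.
  by rewrite -ji ordSK.
case/imsetP => f; rewrite inE => /orP[/eqP sx|/eqP tx] [-> ->].
  by rewrite /lv sx !eqxx.
have sx : (s f == x) = false by apply/negbTE; rewrite -tx; exact: hl.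
rewrite /lv sx tx eqxx /=; case: (f \in D) => //; by rewrite ord_predK eqxx.
Qed.

Lemma H_cubic : cubic hs ht.
Proof.
move=> [x i]; rewrite H_inc card_imset ?hc //.
by move=> e1 e2 [].
Qed.
End Cover.

Lemma four (T : finType) (X A B : {set T}) : A \subset X -> B \subset X ->
  [disjoint A & B] -> 2 <= #|A| -> 2 <= #|B| -> 4 <= #|X|.
Proof.
move=> AX BX dAB hA hB; apply: leq_trans (subset_leq_card (_ : A :|: B \subset X)).
  by rewrite cardsU (disjoint_setI0 dAB) cards0 subn0; lia.
by rewrite subUset AX BX.
Qed.

Lemma deltaS1 (V E : finType) (s t : E -> V) y : loopless s t ->
  delta s t [set y] = incident s t y.
Proof.
move=> hl; apply/setP => e; rewrite !inE.
case: (s e =P y) => [sy|]; case: (t e =P y) => [ty|] //=.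
by move: (hl e); rewrite sy ty eqxx.
Qed.

Section CoverCut.
Variables (V E : finType) (s t : E -> V) (D : {set E}) (k : nat).
Notation L := 'I_k.+2.
Hypothesis hl : loopless s t.
Hypothesis hc : cubic s t.
Hypothesis hcp : cutprop s t.
Variables e1 e2 : E.
Hypothesis hD : D = [set e1; e2].
Hypothesis e12 : e1 != e2.
Hypothesis hm : forall y, #|incident s t y :&: D| <= 1.

Notation Hs := (@hs V E s k).
Notation Ht := (@ht V E t D k).

Definition Sl (S : {set V * L}) (i : L) : {set V} := [set x | (x, i) \in S].

Lemma mem_dH S e i : ((e, i) \in delta Hs Ht S) =
  (((s e, i) \in S) != ((t e, if e \in D then ordS i else i) \in S)).
Proof. by rewrite inE. Qed.

Lemma cardD : #|D| = 2. Proof. by rewrite hD cards2 e12. Qed.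

Lemma dirty_d2 (A : {set V}) : A != set0 -> A != setT -> 2 <= #|delta s t A :\: D|.
Proof.
move=> A0 AT.
have c := cardsID D (delta s t A).
have cI : #|delta s t A :&: D| <= 2 by rewrite -cardD; apply/subset_leq_card/subsetIr.
case: (leqP 4 #|delta s t A|) => h4; first by lia.
have : #|delta s t A| <= 3 by lia.
have single : forall y, #|delta s t [set y] :\: D| >= 2.
  move=> y; rewrite deltaS1 //; have := cardsID D (incident s t y); rewrite hc.
  by have := hm y; lia.
case/hcp => h.
  have : #|A| == 1 by rewrite eqn_leq h /= card_gt0.
  by case/cards1P => y ->.
have : #|~: A| == 1.
  rewrite eqn_leq h /= card_gt0; apply: contra AT => /eqP h0; apply/eqP.
  by rewrite -(setCK A) h0 setC0.
case/cards1P => y hy.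
by rewrite -delta_compl hy.
Qed.

Definition lvlset (i : L) (X : {set E}) : {set E * L} := (fun e => (e, i)) @: X.

Lemma card_lvlset i X : #|lvlset i X| = #|X|.
Proof. by rewrite card_imset // => a b []. Qed.

Lemma disj_lvlset i j X Y : i != j -> [disjoint lvlset i X & lvlset j Y].
Proof.
move=> ij; rewrite -setI_eq0; apply/eqP/setP => [[e l]]; rewrite !inE.
apply/andP => [[/imsetP[a _ [_ ->]] /imsetP[b _ [_ h]]]]; by rewrite h eqxx in ij.
Qed.

Lemma lvl_delta S i : lvlset i (delta s t (Sl S i) :\: D) \subset delta Hs Ht S.
Proof.
apply/subsetP => p /imsetP[e]; rewrite !inE => /andP[eD de] ->.
by rewrite /hs /ht /= (negbTE eD).
Qed.

Lemma ordS_neq (i : L) : ordS i != i.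
Proof.
apply/eqP => /(congr1 (@nat_of_ord _)) /=; case: (ltnP i.+1 k.+2) => h.
  by rewrite modn_small // => hh; lia.
have -> : i.+1 = k.+2 by have := ltn_ord i; lia.
by rewrite modnn => hh; have := ltn_ord i; lia.
Qed.

Lemma ord_pred_neq (i : L) : ord_pred i != i.
Proof. by apply/eqP => h; move: (ordS_neq (ord_pred i)); rewrite ord_predK {1}h eqxx. Qed.

Lemma single_level S j : (forall i, i != j -> Sl S i = set0) -> Sl S j != setT ->
  #|delta Hs Ht S| <= 3 -> #|S| <= 1.
Proof.
move=> h0 hT d3.
have mS : forall x i, ((x, i) \in S) = (i == j) && (x \in Sl S j).
  move=> x i; case: (i =P j) => [->|/eqP ij]; first by rewrite inE.
  by have := h0 i ij => /setP /(_ x); rewrite !inE.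
have cS : #|S| = #|Sl S j|.
  have eS : S = (fun x => (x, j)) @: Sl S j.
    apply/setP => [[x i]]; rewrite mS; apply/idP/imsetP.
      by case/andP => /eqP -> h; exists x.
    by case=> y yS [-> ->]; rewrite eqxx.
  by rewrite {1}eS card_imset // => a b [].
rewrite cS.
set A := Sl S j.
pose g e := (e, if (e \in D) && (s e \notin A) then ord_pred j else j).
have gsub : g @: delta s t A \subset delta Hs Ht S.
  apply/subsetP => p /imsetP[e]; rewrite inE => de ->; rewrite /g mem_dH !mS.
  case: (boolP (e \in D)) => eD /=.
    case: (boolP (s e \in A)) => sA /=.
      by rewrite eqxx /= (negbTE (ordS_neq j)).
    rewrite ord_predK eqxx (negbTE (ord_pred_neq j)) /=.
    by move: de; rewrite (negbTE sA).
  by rewrite eqxx.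
have cg : #|g @: delta s t A| = #|delta s t A| by rewrite card_imset // => a b [].
have dA : #|delta s t A| <= 3 by rewrite -cg; apply: leq_trans (subset_leq_card gsub) d3.
case/hcp: dA => // hA.
have : #|~: A| == 1.
  rewrite eqn_leq hA /= card_gt0; apply: contra hT => /eqP h; apply/eqP.
  by rewrite -[LHS]setCK h setC0.
case/cards1P => y hy.
have dy : delta s t A = incident s t y by rewrite -delta_compl hy deltaS1.
have [e [eD sy ty]] : exists e, [/\ e \in D, s e != y & t e != y].
  case: (boolP ((s e1 != y) && (t e1 != y))) => [/andP[h1 h2]|h1].
    by exists e1; rewrite hD !inE eqxx.
  case: (boolP ((s e2 != y) && (t e2 != y))) => [/andP[h3 h4]|h2].
    by exists e2; rewrite hD !inE eqxx orbT.
  have : 2 <= #|incident s t y :&: D|.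
    apply: leq_trans (_ : 2 <= #|[set e1; e2]|) _; first by rewrite cards2 e12.
    rewrite hD; apply: subset_leq_card; apply/subsetP => x; rewrite !inE.
    case/orP => /eqP ->; rewrite eqxx ?orbT andbT.
      by move: h1; rewrite negb_and !negbK orbC.
    by move: h2; rewrite negb_and !negbK orbC.
  by have := hm y; lia.
have eA : forall v, v != y -> v \in A by move=> v vy; rewrite -(setCK A) hy !inE.
have ein : (e, j) \in delta Hs Ht S.
  by rewrite mem_dH eD !mS eqxx (negbTE (ordS_neq j)) /= eA.
have enot : (e, j) \notin g @: delta s t A.
  apply/imsetP => [[f]]; rewrite dy inE => hf [ef _]; move: hf; rewrite -ef.
  by rewrite (negbTE sy) (negbTE ty).
have : #|(e, j) |: g @: delta s t A| <= 3.
  apply: leq_trans d3; apply: subset_leq_card; by rewrite subUset sub1set ein gsub.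
by rewrite cardsU1 enot cg dy hc.
Qed.

Lemma H_cutprop : cutprop Hs Ht.
Proof.
move=> S dS.
pose P i := Sl S i == setT.
pose dirty i := (Sl S i != set0) && (Sl S i != setT).
have dirty2 : forall i, dirty i -> 2 <= #|lvlset i (delta s t (Sl S i) :\: D)|.
  by move=> i /andP[h1 h2]; rewrite card_lvlset; apply: dirty_d2.
have cl : forall i, ~~ dirty i -> Sl S i = set0 \/ Sl S i = setT.
  move=> i; rewrite /dirty negb_and !negbK => /orP[/eqP ->|/eqP ->]; by [left|right].
have flip : forall i, ~~ dirty i -> ~~ dirty (ordS i) -> P i != P (ordS i) ->
    lvlset i D \subset delta Hs Ht S.
  move=> i di dSi pi; apply/subsetP => p /imsetP[e eD ->]; rewrite mem_dH eD.
  have mem0 : forall l x, Sl S l = set0 -> ((x, l) \in S) = false.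
    by move=> l x /setP /(_ x); rewrite !inE.
  have memT : forall l x, Sl S l = setT -> ((x, l) \in S) = true.
    by move=> l x /setP /(_ x); rewrite !inE.
  case: (cl i di) => h1; case: (cl _ dSi) => h2; move: pi; rewrite /P h1 h2 ?eqxx //.
  - by rewrite (mem0 _ _ h1) (memT _ _ h2).
  - by rewrite (memT _ _ h1) (mem0 _ _ h2).
have cD : forall i, 2 <= #|lvlset i D| by move=> i; rewrite card_lvlset cardD.
have no4 : forall A B : {set E * L}, A \subset delta Hs Ht S -> B \subset delta Hs Ht S ->
    [disjoint A & B] -> 2 <= #|A| -> 2 <= #|B| -> False.
  by move=> A B hA hB dAB h1 h2; have := leq_trans (four hA hB dAB h1 h2) dS.
case: (boolP [exists j, dirty j]) => [/existsP[j dj]|].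
  have uniqd : forall i, i != j -> ~~ dirty i.
    move=> i ij; apply/negP => di.
    by apply: (no4 _ _ (lvl_delta S i) (lvl_delta S j) (disj_lvlset _ _ ij)); apply: dirty2.
  have nflip : forall i, i != j -> i != ord_pred j -> P i = P (ordS i).
    move=> i ij ipj; case: (boolP (P i == P (ordS i))) => [/eqP //|pi]; exfalso.
    have oj : ordS i != j by apply: contra ipj => /eqP <-; rewrite ordSK.
    apply: (no4 _ _ (flip i (uniqd i ij) (uniqd _ oj) pi) (lvl_delta S j) (disj_lvlset _ _ ij)) => //.
    exact: dirty2.
  pose Q i := if i == j then P (ordS j) else P i.
  have hQ : forall i, i != ord_pred j -> Q i = Q (ordS i).
    move=> i ipj; rewrite /Q; case: (i =P j) => [->|/eqP ij].
      by rewrite (negbTE (ordS_neq j)).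
    have oj : (ordS i == j) = false by apply/negbTE; apply: contra ipj => /eqP <-; rewrite ordSK.
    by rewrite oj; apply: nflip.
  have cQ := ring_const hQ.
  have Pi : forall i, i != j -> P i = Q (ordS (ord_pred j)).
    by move=> i ij; rewrite -(cQ i) /Q (negbTE ij).
  rewrite ord_predK /Q eqxx in Pi.
  move/andP: (dj) => [dj0 djT].
  case: (boolP (P (ordS j))) => hb; [right | left].
    apply: (@single_level (~: S) j).
    - move=> i ij; apply/setP => x; rewrite !inE.
      have := Pi i ij; rewrite hb => /eqP /setP /(_ x); rewrite !inE => ->; by [].
    - apply: contra dj0 => /eqP /setP h; apply/eqP/setP => x; move: (h x); rewrite !inE.
      by case: ((x, j) \in S).
    - by have -> : delta Hs Ht (~: S) = delta Hs Ht S by apply: delta_compl.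
  apply: (@single_level S j) => // i ij.
  have h1 := uniqd i ij; have h2 := Pi i ij; rewrite (negbTE hb) /P in h2.
  by move: h1; rewrite /dirty h2 andbT negbK => /eqP.
rewrite negb_exists => /forallP nd.
case: (boolP [exists i0, P i0 != P (ordS i0)]) => [/existsP[i0 pi0]|].
  exfalso.
  have hP : forall i, i != i0 -> P i = P (ordS i).
    move=> i ii0; case: (boolP (P i == P (ordS i))) => [/eqP //|pi]; exfalso.
    exact: (no4 _ _ (flip i (nd i) (nd _) pi) (flip i0 (nd i0) (nd _) pi0) (disj_lvlset _ _ ii0) (cD i) (cD i0)).
  have := ring_const hP i0; by move/eqP: pi0.
rewrite negb_exists => /forallP np.
have hP : forall i, i != ord0 -> P i = P (ordS i) by move=> i _; move: (np i); rewrite negbK => /eqP.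
have cP := ring_const hP.
case: (boolP (P (ordS ord0))) => hb; [right | left].
  have -> : ~: S = set0.
    apply/setP => [[x i]]; rewrite !inE; have := cP i; rewrite hb => /eqP /setP /(_ x).
    by rewrite !inE => ->.
  by rewrite cards0.
have -> : S = set0.
  apply/setP => [[x i]]; rewrite !inE; have := nd i; rewrite /dirty.
  have := cP i; rewrite (negbTE hb) /P => ->; rewrite andbT negbK => /eqP /setP /(_ x).
  by rewrite !inE.
by rewrite cards0.
Qed.
End CoverCut.

Section Color.
Variables (V E : finType) (s t : E -> V) (D : {set E}) (k : nat).
Notation L := 'I_k.+2.
Hypothesis hl : loopless s t.
Hypothesis hc : cubic s t.
Hypothesis hm : forall y, #|incident s t y :&: D| <= 1.
Notation Hs := (@hs V E s k).
Notation Ht := (@ht V E t D k).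

Definition W : {set V} := [set y | [exists e in D, (s e == y) || (t e == y)]].
Definition touched : {set E} := [set f | (s f \in W) || (t f \in W)].

Definition nbr (f : E) : {set E} := (incident s t (s f) :|: incident s t (t f)) :\ f.

Lemma card_nbr f : #|nbr f| <= 4.
Proof.
have h := cardsU (incident s t (s f)) (incident s t (t f)).
have fi : f \in incident s t (s f) :&: incident s t (t f) by rewrite !inE !eqxx orbT.
have hp : 0 < #|incident s t (s f) :&: incident s t (t f)| by apply/card_gt0P; exists f.
have := cardsD1 f (incident s t (s f) :|: incident s t (t f)).
have fU : f \in incident s t (s f) :|: incident s t (t f) by rewrite !inE eqxx.
rewrite fU -/(nbr f) !hc in h *; lia.
Qed.

Variable cH : E * L -> 'I_5.
Hypothesis cHp : proper_coloring Hs Ht cH.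

Definition badcols (i : L) (f : E) : {set 'I_5} := [set cH (g, i) | g in nbr f].

Lemma free_col i f : exists c, c \notin badcols i f.
Proof.
apply/existsP; rewrite -negb_forall; apply/negP => /forallP h.
have : [set: 'I_5] \subset badcols i f by apply/subsetP => c _; exact: h c.
have h2 : #|badcols i f| <= 4 := leq_trans (leq_imset_card _ _) (card_nbr f).
move/subset_leq_card; rewrite cardsT card_ord => h1; lia.
Qed.

Definition ci (i : L) (f : E) : 'I_5 :=
  if f \in D then odflt ord0 [pick c | c \notin badcols i f] else cH (f, i).

Lemma ci_D i f : f \in D -> ci i f \notin badcols i f.
Proof.
move=> fD; rewrite /ci fD; case: pickP => [c //|h].
by have [c hc'] := free_col i f; move: (h c); rewrite hc'.
Qed.

Lemma inc_lvl x i f : f \in incident s t x -> f \notin D -> (f, i) \in incident Hs Ht (x, i).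
Proof.
move=> fx fD; rewrite H_inc //; apply/imsetP; exists f => //.
by rewrite /lv (negbTE fD); case: ifP.
Qed.

Lemma ci_proper i : proper_coloring s t (ci i).
Proof.
move=> x f1 f2 h1 h2 eqc.
case: (f1 =P f2) => // /eqP ne; exfalso.
have nbr12 : forall a b, a \in incident s t x -> b \in incident s t x -> a != b -> b \in nbr a.
  move=> a b ha hb ab; rewrite /nbr !inE eq_sym ab /=.
  move: ha hb; rewrite !inE => /orP[/eqP ->|/eqP ->] ->; by rewrite ?orbT.
have twoD : f1 \in D -> f2 \in D -> False.
  move=> d1 d2; have := hm x.
  have : [set f1; f2] \subset incident s t x :&: D by rewrite subUset !sub1set !in_setI h1 h2 d1 d2.
  by move/subset_leq_card; rewrite cards2 ne; lia.
case: (boolP (f1 \in D)) => d1; case: (boolP (f2 \in D)) => d2.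
- exact: twoD.
- have := ci_D i d1; rewrite eqc /ci (negbTE d2).
  by move/negP; apply; apply/imsetP; exists f2 => //; apply: nbr12.
- have := ci_D i d2; rewrite -eqc /ci (negbTE d1).
  move/negP; apply; apply/imsetP; exists f1 => //; apply: nbr12 => //; by rewrite eq_sym.
- move: eqc; rewrite /ci (negbTE d1) (negbTE d2) => eqc.
  have := cHp (inc_lvl i h1 d1) (inc_lvl i h2 d2) eqc; case=> h; by rewrite h eqxx in ne.
Qed.

Lemma notW_D y e : y \notin W -> e \in incident s t y -> e \notin D.
Proof.
move=> yW ey; apply/negP => eD; move/negP: yW; apply; rewrite inE; apply/existsP; exists e.
by rewrite eD; move: ey; rewrite inE.
Qed.

Lemma colset_eq i y : y \notin W -> colset s t (ci i) y = colset Hs Ht cH (y, i).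
Proof.
move=> yW; rewrite /colset H_inc // -imset_comp.
apply: eq_in_imset => e ey /=.
have eD := notW_D yW ey.
by rewrite /ci /lv (negbTE eD); case: ifP.
Qed.

Lemma abn_transfer i : abnormal_edges s t (ci i) \subset
  touched :|: [set f | (f, i) \in abnormal_edges Hs Ht cH].
Proof.
apply/subsetP => f; rewrite inE => hf; rewrite in_setU.
case: (boolP (f \in touched)) => //= fT.
have [sW tW] : s f \notin W /\ t f \notin W by move: fT; rewrite /touched in_set negb_or => /andP.
rewrite in_set.
have fD : f \notin D by apply: (notW_D sW); rewrite inE eqxx.
rewrite /poor /rich in hf *.
by rewrite inE /poor /rich /hs /ht /= (negbTE fD) -!colset_eq.
Qed.

Lemma abn_level i : (forall c, proper_coloring s t c -> 9 < #|abnormal_edges s t c|) ->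
  #|touched| <= 9 -> exists f, (f, i) \in abnormal_edges Hs Ht cH.
Proof.
move=> cnt hT; have := cnt _ (ci_proper (i:=i)).
move/leq_trans/(_ (subset_leq_card (abn_transfer i))) => h.
have := leq_trans h (leq_card_setU _ _).
case: (set_0Vmem [set f | (f, i) \in abnormal_edges Hs Ht cH]) => [->|[f]].
  by rewrite cards0; lia.
by rewrite inE => hf _; exists f.
Qed.

Lemma abn_count : (forall c, proper_coloring s t c -> 9 < #|abnormal_edges s t c|) ->
  #|touched| <= 9 -> k.+2 <= #|abnormal_edges Hs Ht cH|.
Proof.
move=> cnt hT.
have hf : forall i, exists f, (f, i) \in abnormal_edges Hs Ht cH by move=> i; exact: abn_level.
have [f0 _] := hf ord0.
pose g (i : L) := (odflt f0 [pick f | (f, i) \in abnormal_edges Hs Ht cH], i).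
have gsub : g @: [set: L] \subset abnormal_edges Hs Ht cH.
  apply/subsetP => p /imsetP[i _ ->]; rewrite /g; case: pickP => [f //|h].
  by have [f hf'] := hf i; move: (h f); rewrite hf'.
have := subset_leq_card gsub; rewrite card_imset ?cardsT ?card_ord //.
by move=> a b [].
Qed.
End Color.

Section Find.
Variables (V E : finType) (s t : E -> V).
Hypothesis hl : loopless s t.
Hypothesis hc : cubic s t.
Hypothesis hcp : cutprop s t.
Hypothesis nV : 5 <= #|V|.

Definition other (x : V) (e : E) : V := if s e == x then t e else s e.

Lemma ends x e : e \in incident s t x ->
  forall y, ((s e == y) || (t e == y)) = (y == x) || (y == other x e).
Proof.
rewrite inE /other => h y; case: (s e =P x) h => [->|sx] /= h.
  by rewrite !(eq_sym _ y).
by move/eqP: h => ->; rewrite orbC !(eq_sym _ y).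
Qed.

Lemma other_neq x e : e \in incident s t x -> other x e != x.
Proof.
rewrite inE /other => h; case: (s e =P x) h => [<-|sx] /= h.
  by rewrite eq_sym; apply: hl.
by apply/eqP.
Qed.

Lemma other_inc x e : e \in incident s t x -> e \in incident s t (other x e).
Proof. by rewrite !inE /other; case: (s e =P x) => _; rewrite eqxx ?orbT. Qed.

Lemma another x g : exists e, e \in incident s t x /\ e != g.
Proof.
have : 0 < #|incident s t x :\ g|.
  have := cardsD1 g (incident s t x); rewrite hc; case: (g \in _) => /=; lia.
case/card_gt0P => e; rewrite !inE => /andP[eg ex]; exists e; by rewrite inE ex.
Qed.

Lemma cut_bound (A : {set V}) (X : {set E}) : X \subset inner s t A ->
  #|delta s t A| + 2 * #|X| <= 3 * #|A|.
Proof.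
move=> XA; have := handshake A hl.
rewrite (eq_bigr (fun _ => 3)) ?sum_nat_const; last by move=> v _; apply: hc.
have := subset_leq_card XA; lia.
Qed.

Lemma small_contra (A : {set V}) : #|delta s t A| <= 3 -> 2 <= #|A| -> #|A| + 1 < 5 -> False.
Proof.
move=> d3 A2 A4; have := cardsC A; case: (hcp d3) => h; lia.
Qed.

Lemma cardU_le (T : finType) (A B : {set T}) a b : #|A| <= a -> #|B| <= b ->
  0 < #|A :&: B| -> #|A :|: B| <= a + b - 1.
Proof. move=> ha hb hi; have := cardsU A B; lia. Qed.

Lemma cut_contra (A : {set V}) (X : {set E}) : X \subset inner s t A ->
  #|A| <= #|X| -> 2 <= #|A| -> #|A| <= 3 -> False.
Proof.
move=> XA AX A2 A3; have h := cut_bound XA.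
apply: (small_contra (A := A)) => //; lia.
Qed.

Lemma find_D : exists e1 e2 : E, [/\ e1 != e2,
  (forall y, #|incident s t y :&: [set e1; e2]| <= 1) &
  #|touched s t [set e1; e2]| <= 9].
Proof.
have : 0 < #|V| by lia.
case/card_gt0P => v0 _.
have : 0 < #|incident s t v0| by rewrite hc.
case/card_gt0P => g _.
set v := s g; set w := t g.
have vw : v != w by apply: hl.
have gv : g \in incident s t v by rewrite inE eqxx.
have gw : g \in incident s t w by rewrite inE eqxx orbT.
have [e1 [e1v e1g]] := another v g.
have [e2 [e2w e2g]] := another w g.
set u := other v e1; set z := other w e2.
have uv : u != v by apply: other_neq.
have zw : z != w by apply: other_neq.
have e1u : e1 \in incident s t u by apply: other_inc.
have e2z : e2 \in incident s t z by apply: other_inc.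
have inner_of : forall (A : {set V}) e x, e \in incident s t x -> x \in A -> other x e \in A ->
    e \in inner s t A.
  move=> A e x ex xA oA; rewrite inE.
  have h1 := ends ex (s e); have h2 := ends ex (t e).
  rewrite eqxx /= in h1 h2.
  have hs1 : (s e == x) || (s e == other x e) by rewrite -h1.
  have ht1 : (t e == x) || (t e == other x e) by move: h2; rewrite eqxx orbT => <-.
  by case/orP: hs1 => /eqP ->; case/orP: ht1 => /eqP ->; rewrite ?xA ?oA.
have gin : forall A : {set V}, v \in A -> w \in A -> g \in inner s t A.
  by move=> A vA wA; rewrite inE vA wA.
have uw : u != w.
  apply/negP => /eqP uw.
  set A := [set v; w].
  have XA : [set g; e1] \subset inner s t A.
    rewrite subUset !sub1set; apply/andP; split; first by apply: gin; rewrite !inE eqxx ?orbT.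
    by apply: (inner_of A e1 v) => //; rewrite ?inE ?eqxx // -/u uw eqxx orbT.
  by apply: (cut_contra XA); rewrite /A !cards2 ?vw ?(eq_sym g) ?e1g.
have zv : z != v.
  apply/negP => /eqP zv.
  set A := [set v; w].
  have XA : [set g; e2] \subset inner s t A.
    rewrite subUset !sub1set; apply/andP; split; first by apply: gin; rewrite !inE eqxx ?orbT.
    by apply: (inner_of A e2 w) => //; rewrite ?inE ?eqxx ?orbT // -/z zv eqxx.
  by apply: (cut_contra XA); rewrite /A !cards2 ?vw ?(eq_sym g) ?e2g.
have e12 : e1 != e2.
  apply/negP => /eqP h; move: (ends e1v w); rewrite h (ends e2w w) eqxx /= eq_sym (negbTE vw) /=.
  by rewrite -h -/u eq_sym (negbTE uw).
have uz : u != z.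
  apply/negP => /eqP uz.
  set A := [set u; v; w].
  have XA : [set e1; e2; g] \subset inner s t A.
    rewrite !subUset !sub1set (gin A) ?andbT; last by rewrite !inE eqxx ?orbT.
      2: by rewrite !inE eqxx ?orbT.
    apply/andP; split.
      by apply: (inner_of A e1 v) => //; rewrite ?inE ?eqxx ?orbT.
    apply: (inner_of A e2 w) => //; first by rewrite !inE eqxx ?orbT.
    by rewrite -/z -uz !inE eqxx.
  have c3 : #|[set e1; e2; g]| = 3.
    by rewrite -setUA cardsU1 cards2 !inE (negbTE e12) (negbTE e1g) e2g.
  have cA : #|A| = 3.
    by rewrite /A -setUA cardsU1 cards2 !inE (negbTE uv) (negbTE uw) vw.
  by apply: (cut_contra XA); rewrite ?c3 ?cA.
have end1 : forall y, e1 \in incident s t y -> (y == v) || (y == u).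
  by move=> y; rewrite -(ends e1v y) inE.
have end2 : forall y, e2 \in incident s t y -> (y == w) || (y == z).
  by move=> y; rewrite -(ends e2w y) inE.
exists e1, e2; split => //.
  move=> y.
  have ne : e1 \in incident s t y -> e2 \in incident s t y -> False.
    move=> /end1 h1 /end2 h2.
    case/orP: h1 => /eqP a; case/orP: h2 => /eqP b.
    - by move: vw; rewrite -a -b eqxx.
    - by move: zv; rewrite -a -b eqxx.
    - by move: uw; rewrite -a -b eqxx.
    - by move: uz; rewrite -a -b eqxx.
  case: (boolP (e1 \in incident s t y)) => h1.
    apply: leq_trans (_ : #|[set e1]| <= 1); last by rewrite cards1.
    apply: subset_leq_card; apply/subsetP => f /setIP[fy]; rewrite !inE => /orP[] /eqP ff.
      by rewrite ff.
    by rewrite ff in fy; case: (ne h1 fy).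
  apply: leq_trans (_ : #|[set e2]| <= 1); last by rewrite cards1.
  apply: subset_leq_card; apply/subsetP => f /setIP[fy]; rewrite !inE => /orP[] /eqP ff.
    by rewrite ff in fy; rewrite fy in h1.
  by rewrite ff.
set U1 := incident s t u :|: incident s t v.
set U2 := incident s t w :|: incident s t z.
have cU1 : #|U1| <= 5.
  apply: (@cardU_le _ _ _ 3 3); rewrite ?hc //.
  by apply/card_gt0P; exists e1; rewrite in_setI e1u e1v.
have cU2 : #|U2| <= 5.
  apply: (@cardU_le _ _ _ 3 3); rewrite ?hc //.
  by apply/card_gt0P; exists e2; rewrite in_setI e2w e2z.
have cU : #|U1 :|: U2| <= 9.
  apply: (cardU_le cU1 cU2).
  by apply/card_gt0P; exists g; rewrite in_setI !in_setU gv gw ?orbT.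
apply: leq_trans cU; apply: subset_leq_card; apply/subsetP => f.
have Wsub : forall y, y \in W s t [set e1; e2] -> (y == u) || (y == v) || (y == w) || (y == z).
  move=> y; rewrite inE => /existsP[e /andP[]]; rewrite !inE => /orP[] /eqP -> hy.
    by have := end1 y; rewrite inE hy => /(_ isT) /orP[] ->; rewrite ?orbT.
  by have := end2 y; rewrite inE hy => /(_ isT) /orP[] ->; rewrite ?orbT.
have incU : forall y, (y == u) || (y == v) || (y == w) || (y == z) -> f \in incident s t y -> f \in U1 :|: U2.
  move=> y; rewrite !inE => /orP[/orP[/orP[]|]|] /eqP -> ->; by rewrite ?orbT.
rewrite inE => /orP[] /Wsub h; apply: (incU _ h); by rewrite inE eqxx ?orbT.
Qed.
End Find.

Lemma sub_const9 : sublinear (fun _ => 9).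
Proof.
move=> eps heps.
have [hN _] := archimed (9 / eps).
exists (Z.to_nat (up (9 / eps))) => n hn.
rewrite /R_dist Rminus_0_r.
have hn' : Rle (IZR (up (9 / eps))) (INR n).
  apply: Rle_trans (_ : Rle (IZR (Z.of_nat n)) (INR n)); last by rewrite INR_IZR_INZ; lra.
  apply: IZR_le.
  have h9 : Rlt 0 (9 / eps) by apply: Rdiv_lt_0_compat; lra.
  have : Rlt 0 (IZR (up (9 / eps))) by lra.
  move/lt_0_IZR => hpos.
  lia.
have hpos : Rlt 0 (INR n).
  have h9 : Rlt 0 (9 / eps) by apply: Rdiv_lt_0_compat; lra.
  lra.
rewrite Rabs_right; last first.
  apply: Rle_ge; apply: Rle_mult_inv_pos => //; apply: pos_INR.
apply: (Rmult_lt_reg_r (INR n)) => //.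
rewrite /Rdiv Rmult_assoc Rinv_l; last by lra.
rewrite Rmult_1_r.
have h : Rlt (9 / eps) (INR n) by lra.
have e9 : Rmult eps (9 / eps) = IZR 9 by field; lra.
have := Rmult_lt_compat_l eps _ _ heps h; rewrite e9.
have i9 : INR 9 = IZR 9 by simpl; lra.
rewrite i9; lra.
Qed.

Lemma not_sublinear (f : nat -> nat) (n : nat) : 0 < n ->
  (forall k, k.+2 <= f (n * k.+2)) -> ~ sublinear f.
Proof.
move=> n0 hf hs.
have hn : Rlt 0 (INR n) by apply: lt_0_INR; apply/ltP.
have [N hN] := hs (Rinv (INR n)) (Rinv_0_lt_compat _ hn).
set m := (n * N.+2)%N.
have hm : (m >= N)%coq_nat.
  apply/leP; rewrite /m; apply: leq_trans (leqW (leqnSn N)) _; exact: leq_pmull.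
have := hN m hm; rewrite /R_dist Rminus_0_r.
have hfm : Rle (INR N.+2) (INR (f m)) by apply: le_INR; apply/leP; apply: hf.
have hmr : INR m = Rmult (INR n) (INR N.+2) by rewrite /m -mult_INR.
have hN2 : Rlt 0 (INR N.+2) by apply: lt_0_INR; lia.
rewrite Rabs_right; last first.
  apply: Rle_ge; apply: Rle_mult_inv_pos; first exact: pos_INR.
  by rewrite hmr; apply: Rmult_lt_0_compat.
rewrite hmr => h.
have : Rge (Rmult (INR (f m)) (Rinv (Rmult (INR n) (INR N.+2)))) (Rinv (INR n)).
  apply: Rle_ge.
  have -> : Rinv (INR n) = Rmult (INR N.+2) (Rinv (Rmult (INR n) (INR N.+2))) by field; lra.
  apply: Rmult_le_compat_r => //.
  apply: Rlt_le; apply: Rinv_0_lt_compat; exact: Rmult_lt_0_compat.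
lra.
Qed.

Theorem mainTheorem5 :
  (forall (V E : finType) (s t : E -> V), c4c_cubic s t ->
     exists c : E -> 'I_5, proper_coloring s t c /\ #|abnormal_edges s t c| <= 9)
  <->
  (exists f : nat -> nat, sublinear f /\
     forall (V E : finType) (s t : E -> V), c4c_cubic s t ->
       exists c : E -> 'I_5, proper_coloring s t c /\
         #|abnormal_edges s t c| <= f #|V|).
Proof.
split.
  move=> ha; exists (fun _ => 9); split; first exact: sub_const9.
  move=> V E s t hG; have [c [cp cb]] := ha V E s t hG; by exists c.
case=> f [fsub hf] V E s t hG.
case: (classic (exists c : E -> 'I_5, proper_coloring s t c /\ #|abnormal_edges s t c| <= 9)) => // hno.
exfalso.
have cnt : forall c, proper_coloring s t c -> 9 < #|abnormal_edges s t c|.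
  move=> c cp; rewrite ltnNge; apply/negP => h; apply: hno; by exists c.
have [c0 [c0p _]] := hf V E s t hG.
case: hG => hl hc h4.
have hcp := c4c_cutprop hl hc h4.
have E10 : 10 <= #|E| := leq_trans (cnt c0 c0p) (max_card _).
have nV : 5 <= #|V|.
  have := handshake [set: V] hl.
  rewrite (eq_bigr (fun _ => 3)) ?sum_nat_const; last by move=> v _; apply: hc.
  have -> : inner s t [set: V] = [set: E] by apply/setP => e; rewrite !inE.
  rewrite !cardsT => h; lia.
have [e1 [e2 [e12 hm hT]]] := find_D hl hc hcp nV.
have key : forall k, k.+2 <= f (#|V| * k.+2).
  move=> k.
  have hHl := H_loopless [set e1; e2] (k := k) hl.
  have hH : c4c_cubic (hs s (k := k)) (ht t [set e1; e2] (k := k)).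
    split => //; first exact: H_cubic.
    apply: cutprop_c4c => //.
    exact: (H_cutprop (k := k) hl hc hcp (erefl _) e12 hm).
  have [cH [cHp cHb]] := hf _ _ _ _ hH.
  have := abn_count hl hc hm cHp cnt hT.
  move/leq_trans; apply.
  by move: cHb; rewrite card_prod card_ord.
apply: (not_sublinear _ key fsub).
lia.
Qed.
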